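(* There is an absolute constant $c>0$ such that for every integer $\ell\ge1$, all $n\le m$ and every $X=(x_1,\dots,x_m)\in[n]^m$, $\min_T \ell\text{-DistTree}_T(X)\le c\cdot\mathsf{UB}^{\ell}(X)$, the minimum being over all BSTs $T$ on $[n]$.
   Context: $\log(x)=\log_2(\max\{2,x\})$. For a BST $T$ on $[n]$ with root $r$, let $d_T(a,b)$ be the number of edges between $a$ and $b$ in $T$, set $x_0=r$, and define $\ell\text{-DistTree}_T(X)=\sum_{i=1}^m\min_{j\in[i-\ell,i),\,j\ge0}\{d_T(x_i,x_j)+1\}$. $\mathsf{UB}^{\ell}(X)=\sum_{t=1}^m\min_{t'\in[t-\ell,t),\,t'\ge1}\log\big(|x_t-x_{t'}|+\rho_t(x_{t'})\big)$, where $\rho_t(a)$ is the number of distinct keys accessed strictly between the last time $s<t$ with $x_s=a$ and time $t$ (all keys considered accessed at time $0$), and the term for $t=1$ (empty range) is interpreted as $\log n$. *)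

(* Defs.v *)
From Stdlib Require Import Reals.
From mathcomp Require Import all_boot.
Set Implicit Arguments. Unset Strict Implicit. Unset Printing Implicit Defensive.

Definition logm (x : R) : R := Rdiv (ln (Rmax (INR 2) x)) (ln (INR 2)).

Inductive tree := Leaf | Node of tree & nat & tree.

Fixpoint inorder (t : tree) : seq nat :=
  match t with Leaf => [::] | Node l k r => inorder l ++ k :: inorder r end.

(* T is a BST on [n] = {1,...,n}: its in-order traversal is 1,2,...,n
   (strictly increasing, so keys are distinct and the BST property holds). *)
Definition is_bst_on (n : nat) (t : tree) : Prop := inorder t = iota 1 n.

Definition root (t : tree) : nat := if t is Node _ k _ then k else 0.

(* list of keys on the root-to-a path (inclusive); [::] if a is not in t *)
Fixpoint anc (t : tree) (a : nat) : seq nat :=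
  match t with
  | Leaf => [::]
  | Node l k r =>
      if k == a then [:: k]
      else if a \in inorder l then k :: anc l a
      else if a \in inorder r then k :: anc r a
      else [::]
  end.

Fixpoint lcp (s1 s2 : seq nat) : nat :=
  match s1, s2 with
  | x :: s1', y :: s2' => if x == y then (lcp s1' s2').+1 else 0
  | _, _ => 0
  end.

Definition dT (t : tree) (a b : nat) : nat :=
  size (anc t a) + size (anc t b) - 2 * lcp (anc t a) (anc t b).

Definition nmin (s : seq nat) : nat := foldr minn (head 0 s) s.
Definition rmin (s : seq R) : R := foldr Rmin (head R0 s) s.

(* access sequence X = (x_1,...,x_m) stored as a seq; x_i = nth 0 X (i-1) *)
Definition acc (X : seq nat) (i : nat) : nat := nth 0 X i.-1.

Definition xt (t : tree) (X : seq nat) (i : nat) : nat :=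
  if i == 0 then root t else acc X i.

(* l-DistTree_T(X) = sum_{i=1}^m min_{j in [i-l,i), j>=0} (d_T(x_i,x_j)+1) *)
Definition DistTree (l : nat) (t : tree) (X : seq nat) : nat :=
  \sum_(1 <= i < (size X).+1)
     nmin [seq (dT t (xt t X i) (xt t X j)).+1 | j <- iota (i - l) (i - (i - l))].

(* last time s < t with x_s = a (0 if none: all keys accessed at time 0) *)
Definition last_acc (X : seq nat) (t a : nat) : nat :=
  \max_(1 <= s < t | acc X s == a) s.

Definition rho (X : seq nat) (t a : nat) : nat :=
  let s := last_acc X t a in
  size (undup [seq acc X u | u <- iota s.+1 (t.-1 - s)]).

Definition absdiff (a b : nat) : nat := (a - b) + (b - a).

(* UB^l(X); the t = 1 term (empty range) is log n *)
Definition UB (l n : nat) (X : seq nat) : R :=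
  \big[Rplus/R0]_(1 <= t < (size X).+1)
    (if t == 1 then logm (INR n)
     else rmin [seq logm (INR (absdiff (acc X t) (acc X t') + rho X t (acc X t')))
               | t' <- iota (maxn 1 (t - l)) (t - maxn 1 (t - l))]).

(* Main.v *)
Require Import Defs.
From Stdlib Require Import Reals Lia Lra Classical.
From mathcomp Require Import all_boot zify.
Set Implicit Arguments. Unset Strict Implicit. Unset Printing Implicit Defensive.


Fixpoint height (t : tree) : nat :=
  match t with Leaf => 0 | Node l _ r => (maxn (height l) (height r)).+1 end.

Lemma size_anc t a : size (anc t a) <= height t.
Proof.
elim: t => [|l IHl k r IHr] //=.
case: eqP => _ //=. case: ifP => _ /=; first by move: (IHl); lia.
case: ifP => _ /=; first by move: (IHr); lia. done.
Qed.

Lemma dT_height t a b : dT t a b <= 2 * height t.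
Proof. rewrite /dT. move: (size_anc t a) (size_anc t b). lia. Qed.

Lemma dT_left l k r a b : uniq (inorder (Node l k r)) ->
  a \in inorder l -> b \in inorder l -> dT (Node l k r) a b = dT l a b.
Proof.
move=> /= U Ha Hb.
have Hk : k \notin inorder l.
  by move: U; rewrite cat_uniq /= => /and3P [_ /norP [] ].
have ka : (k == a) = false by apply/eqP => E; move: Hk; rewrite E Ha.
have kb : (k == b) = false by apply/eqP => E; move: Hk; rewrite E Hb.
rewrite /dT /= ka kb Ha Hb /= eqxx. lia.
Qed.

Lemma dT_right l k r a b : uniq (inorder (Node l k r)) ->
  a \in inorder r -> b \in inorder r -> dT (Node l k r) a b = dT r a b.
Proof.
move=> /= U Ha Hb.
move: U; rewrite cat_uniq /= => /and3P [_ H1 /andP [Hk _]].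
have Hl : forall x, x \in inorder r -> (x \in inorder l) = false.
  move=> x Hx; apply/negbTE; apply/negP => Hxl.
  move/negP: H1; apply; apply/orP; right; apply/hasP; by exists x.
have ka : (k == a) = false by apply/eqP => E; move: Hk; rewrite E Ha.
have kb : (k == b) = false by apply/eqP => E; move: Hk; rewrite E Hb.
rewrite /dT /= ka kb Ha Hb (Hl a Ha) (Hl b Hb) /= eqxx. lia.
Qed.

Fixpoint build (s n j base : nat) : tree :=
  match j with
  | 0 => Leaf
  | j0.+1 =>
      let mid := base + 2 ^ j0 - 1 in
      if (s < mid) && (mid <= n + s) then
        Node (build s n j0 base) (mid - s) (build s n j0 (base + 2 ^ j0))
      else if mid <= s then build s n j0 (base + 2 ^ j0) else build s n j0 base
  end.

Lemma mem_build s n j base x :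
  (x \in inorder (build s n j base)) =
  [&& 0 < x, x <= n, base <= x + s & x + s < base + 2 ^ j - 1].
Proof.
elim: j base => [|j IH] base /=; first by rewrite expn0 in_nil; lia.
have P1 : 0 < 2 ^ j by rewrite expn_gt0.
rewrite expnS.
case: ifP => H1. by rewrite mem_cat inE !IH; lia.
case: ifP => H2; rewrite IH; lia.
Qed.

Lemma height_build s n j base : height (build s n j base) <= j.
Proof.
elim: j base => [|j IH] base //=.
case: ifP => _ /=; first by move: (IH base) (IH (base + 2^j)); lia.
case: ifP => _; [move: (IH (base + 2^j))|move: (IH base)]; lia.
Qed.

Lemma pairwise_build s n j base : pairwise ltn (inorder (build s n j base)).
Proof.
elim: j base => [|j IH] base //=.
have P1 : 0 < 2 ^ j by rewrite expn_gt0.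
case: ifP => H1; last by case: ifP.
rewrite pairwise_cat /= IH IH andbT.
apply/andP; split.
- apply/allrelP => x y; rewrite !mem_build inE mem_build => Hx /orP [/eqP ->|Hy]; lia.
- apply/allP => y; rewrite mem_build /=; lia.
Qed.

Lemma uniq_build s n j base : uniq (inorder (build s n j base)).
Proof.
apply: (sorted_uniq ltn_trans ltnn). apply: pairwise_sorted. apply: pairwise_build.
Qed.

Lemma build_bst s n K : n < 2 ^ K -> s < 2 ^ K -> is_bst_on n (build s n K.+1 0).
Proof.
move=> Hn Hs; rewrite /is_bst_on.
apply: (irr_sorted_eq ltn_trans ltnn).
- apply: pairwise_sorted; apply: pairwise_build.
- apply: iota_ltn_sorted.
- move=> x; rewrite mem_build mem_iota expnS. lia.
Qed.

Definition indw s a b J : bool :=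
  has (dvdn (2 ^ J)) (iota (minn a b + s + 1) (absdiff a b + 1)).

Lemma indw_mono s a b J J' : J <= J' -> indw s a b J' -> indw s a b J.
Proof.
move=> HJ /hasP [q Hq Hd]; apply/hasP; exists q => //.
apply: dvdn_trans Hd; by rewrite dvdn_exp2l.
Qed.

Lemma main_build s n a b j base : 2 ^ j %| base ->
  a \in inorder (build s n j base) -> b \in inorder (build s n j base) ->
  dT (build s n j base) a b <= 2 * \sum_(0 <= J < j) indw s a b J.
Proof.
elim: j base => [|j IH] base Hdiv Ha Hb.
  by move: Ha; rewrite mem_build expn0; lia.
have E : \sum_(0 <= J < j.+1) indw s a b J = \sum_(0 <= J < j) indw s a b J + indw s a b j.
  by rewrite big_nat_recr.
rewrite E.
case Hi: (indw s a b j).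
  have -> : \sum_(0 <= i < j) indw s a b i = j.
    rewrite (@eq_big_nat _ _ _ 0 j _ (fun _ => 1)); first by rewrite sum_nat_const_nat muln1 subn0.
    move=> i Hij; by rewrite (indw_mono (ltnW (proj2 (andP Hij))) Hi).
  move: (dT_height (build s n j.+1 base) a b) (height_build s n j.+1 base).
  rewrite -[(true : nat)]/1; lia.
rewrite -[(false : nat)]/0 addn0.
have Hd1 : 2 ^ j %| base by apply: dvdn_trans Hdiv; rewrite dvdn_exp2l.
have Hd2 : 2 ^ j %| base + 2 ^ j by rewrite dvdn_add.
have Hw : (base + 2 ^ j \in iota (minn a b + s + 1) (absdiff a b + 1)) = false.
  apply/negP => Hm; move/negP: Hi; apply; apply/hasP; by exists (base + 2 ^ j).
move: Hw; rewrite mem_iota /absdiff => Hw.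
have P1 : 0 < 2 ^ j by rewrite expn_gt0.
have Ha' := Ha; have Hb' := Hb.
move: Ha Hb; rewrite !mem_build expnS => Ha Hb.
move: Ha' Hb'.
rewrite /=.
case: ifP => H1.
  move=> Ha' Hb'.
  have U := uniq_build s n j.+1 base; move: U; rewrite /= H1 => U.
  case: (ltnP (a + s) (base + 2 ^ j - 1)) => Hc.
  - rewrite dT_left //; last 2 first.
      by rewrite mem_build; lia.
      by rewrite mem_build; lia.
    apply: IH => //; rewrite mem_build; lia.
  - rewrite dT_right //; last 2 first.
      by rewrite mem_build; lia.
      by rewrite mem_build; lia.
    apply: IH => //; rewrite mem_build; lia.
case: ifP => H2 Ha' Hb'.
- exact: IH.
- exact: IH.
Qed.

Lemma cnt0 d q : 0 < d -> \sum_(0 <= s < q * d) (d %| s) = q.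
Proof.
move=> Hd; elim: q => [|q IH]; first by rewrite mul0n big_geq.
rewrite mulSn addnC (@big_cat_nat _ _ _ (q * d)) //=; last by lia.
rewrite IH big_ltn; last by lia.
rewrite dvdn_mull // big_nat_cond big1; first by rewrite addn0 addnC.
move=> i /andP [/andP [H1 H2] _].
have -> : i = q * d + (i - q * d) by lia.
rewrite dvdn_addr ?dvdn_mull //.
suff -> : (d %| i - q * d) = false by [].
apply/negP => /dvdn_leq; lia.
Qed.

Lemma cnt d q x : 0 < d -> \sum_(0 <= s < q * d) (d %| x + s) = q.
Proof.
move=> Hd; elim: x => [|x IH].
  exact: (cnt0 q Hd).

have E1 : \sum_(0 <= s < (q * d).+1) (d %| x + s) =
   (d %| x + 0) + \sum_(1 <= s < (q * d).+1) (d %| x + s) by rewrite big_ltn.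
have E2 : \sum_(0 <= s < (q * d).+1) (d %| x + s) =
   \sum_(0 <= s < q * d) (d %| x + s) + (d %| x + q * d) by rewrite big_nat_recr.
have E3 : \sum_(1 <= s < (q * d).+1) (d %| x + s) = \sum_(0 <= s < q * d) (d %| x.+1 + s).
  rewrite big_add1 /=; apply: eq_big_nat => i _; by rewrite addSnnS.
have E4 : (d %| x + q * d) = (d %| x + 0) by rewrite addn0 dvdn_addl // dvdn_mull.
move: E1 E2; rewrite E3 E4 => ->; lia.
Qed.

Lemma count_iota_sum (p : pred nat) y w : count p (iota y w) = \sum_(0 <= i < w) p (y + i).
Proof.
elim: w => [|w IH]; first by rewrite big_geq.
by rewrite -addn1 iotaD count_cat IH addn1 big_nat_recr //= addn0.
Qed.

Lemma sum_ind_cnt a b K J : J <= K ->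
  \sum_(0 <= s < 2 ^ K) indw s a b J <= (absdiff a b + 1) * 2 ^ (K - J).
Proof.
move=> HJ.
set w := absdiff a b + 1.
have Hd : 0 < 2 ^ J by rewrite expn_gt0.
apply: (@leq_trans (\sum_(0 <= s < 2 ^ K) \sum_(0 <= i < w) (2 ^ J %| (minn a b + 1 + i) + s))).
  apply: leq_sum => s _.
  rewrite /indw has_count count_iota_sum.
  set S1 := (X in _ < X).
  have -> : S1 = \sum_(0 <= i < w) (2 ^ J %| minn a b + 1 + i + s).
    apply: eq_big_nat => i _; congr (_ %| _); lia.
  case: (\sum_(0 <= i < w) _) => //.
rewrite exchange_big_nat /=.
have EK : 2 ^ K = 2 ^ (K - J) * 2 ^ J by rewrite -expnD subnK.
rewrite EK (eq_big_nat _ _ (fun i _ => cnt (2 ^ (K - J)) (minn a b + 1 + i) Hd)).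
by rewrite sum_nat_const_nat subn0.
Qed.

Lemma geo K e M : e <= M -> M <= K + e + 1 ->
  \sum_(e <= J < M) 2 ^ (K + e - J) + 2 ^ (K + e + 1 - M) = 2 ^ (K + 1).
Proof.
elim: M => [|M IH] H1 H2.
  have -> : e = 0 by lia. by rewrite big_geq // addn0 subn0.
case: (ltnP M e) => HM.
  have -> : e = M.+1 by lia. rewrite big_geq //. congr (_ + 2 ^ _); lia.
rewrite big_nat_recr //= -addnA -(IH HM); last by lia.
congr (_ + _).
have -> : K + e + 1 - M = (K + e - M).+1 by lia.
have -> : K + e + 1 - M.+1 = K + e - M by lia.
by rewrite expnS mul2n -addnn.

Qed.

Lemma sumbound K e w : w <= 2 ^ e ->
  \sum_(0 <= J < K.+1) minn (2 ^ K) (w * 2 ^ (K - J)) <= 2 ^ K * (e + 2).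
Proof.
move=> Hw.
case: (ltnP (K.+1) e) => HKe.
  apply: (@leq_trans (\sum_(0 <= J < K.+1) 2 ^ K)).
    apply: leq_sum => J _; exact: geq_minl.
  rewrite sum_nat_const_nat subn0 mulnC leq_mul2l; apply/orP; right; lia.
rewrite (@big_cat_nat _ _ _ e) //=.
have E1 : \sum_(0 <= J < e) minn (2 ^ K) (w * 2 ^ (K - J)) <= e * 2 ^ K.
  apply: (@leq_trans (\sum_(0 <= J < e) 2 ^ K)).
    apply: leq_sum => J _; exact: geq_minl.
  by rewrite sum_nat_const_nat subn0.
have E2 : \sum_(e <= J < K.+1) minn (2 ^ K) (w * 2 ^ (K - J)) <=
          \sum_(e <= J < K.+1) 2 ^ (K + e - J).
  rewrite big_nat_cond [X in _ <= X]big_nat_cond.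
  apply: leq_sum => J /andP [/andP [HJ1 HJ2] _].
  apply: leq_trans (geq_minr _ _) _.
  apply: (@leq_trans (2 ^ e * 2 ^ (K - J))); first by rewrite leq_mul2r Hw orbT.
  rewrite -expnD; apply: leq_pexp2l => //; lia.
have E3 := @geo K e K.+1 HKe ltac:(lia).
have E4 : \sum_(e <= J < K.+1) 2 ^ (K + e - J) <= 2 ^ (K + 1).
  rewrite -E3; lia.
rewrite addn1 expnS in E4.
rewrite mulnDr mulnC; lia.
Qed.

Lemma pair_sum n K a b e : n < 2 ^ K -> 0 < a <= n -> 0 < b <= n ->
  absdiff a b + 1 <= 2 ^ e ->
  \sum_(0 <= s < 2 ^ K) dT (build s n K.+1 0) a b <= 2 ^ K * (2 * (e + 2)).
Proof.
move=> Hn Ha Hb He.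
have HK2 : 2 ^ K.+1 = 2 * 2 ^ K by rewrite expnS.
apply: (@leq_trans (\sum_(0 <= s < 2 ^ K) 2 * \sum_(0 <= J < K.+1) indw s a b J)).
  rewrite big_nat_cond [X in _ <= X]big_nat_cond.
  apply: leq_sum => s /andP [/andP [_ Hs] _].
  apply: main_build; first by rewrite dvdn0.
  - rewrite mem_build; lia.
  - rewrite mem_build; lia.
rewrite -big_distrr /= exchange_big_nat /=.
rewrite mulnCA leq_mul2l /=.
apply: leq_trans (sumbound K He).
rewrite big_nat_cond [X in _ <= X]big_nat_cond.
apply: leq_sum => J /andP [/andP [_ HJ] _].
rewrite leq_min; apply/andP; split.
- apply: (@leq_trans (\sum_(0 <= s < 2 ^ K) 1)); last by rewrite sum_nat_const_nat subn0 muln1.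
  apply: leq_sum => s _; exact: leq_b1.
- apply: sum_ind_cnt; lia.
Qed.

Definition lg (x : nat) : nat := trunc_log 2 (maxn 2 x).

Lemma lg_ge1 x : 1 <= lg x.
Proof. rewrite /lg trunc_log_gt0; lia. Qed.

Lemma lg_lt x : x < 2 ^ (lg x).+1.
Proof. apply: leq_trans (trunc_log_ltn _ _) => //; lia. Qed.

Lemma lg_mono x y : x <= y -> lg x <= lg y.
Proof. move=> H; apply: leq_trunc_log; lia. Qed.

Lemma expn_pow a k : expn a k = Nat.pow a k.
Proof. elim: k => [|k IH] //; by rewrite expnS IH. Qed.

Lemma INR_maxn a b : INR (maxn a b) = Rmax (INR a) (INR b).
Proof.
case: (leqP a b) => H.
- rewrite Rmax_right //; apply: le_INR; lia.
- rewrite Rmax_left //; apply: le_INR; lia.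
Qed.

Lemma ln_le' x y : Rlt 0 x -> Rle x y -> Rle (ln x) (ln y).
Proof.
move=> H0 H; case: (Rle_lt_or_eq_dec _ _ H) => H'.
- left; exact: ln_increasing.
- rewrite H'; exact: Rle_refl.
Qed.

Lemma ln2_pos : Rlt 0 (ln (INR 2)).
Proof. rewrite -ln_1; apply: ln_increasing; simpl; lra. Qed.

Lemma lg_logm x : Rle (INR (lg x)) (logm (INR x)).
Proof.
rewrite /logm -INR_maxn /lg.
set y := maxn 2 x.
have Hy : 2 <= y by rewrite /y; lia.
have Hp := trunc_logP (isT : 1 < 2) (ltnW Hy).
set k := trunc_log 2 y in Hp *.
have H2 := ln2_pos.
apply: (Rmult_le_reg_r (ln (INR 2))) => //.
rewrite /Rdiv Rmult_assoc Rinv_l; last lra.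
rewrite Rmult_1_r -ln_pow; last (simpl; lra).
apply: ln_le'.
- apply: pow_lt; simpl; lra.
- rewrite -pow_INR -expn_pow; apply: le_INR; apply/leP; exact: Hp.
Qed.

Lemma logm_ge1 x : Rle 1 (logm x).
Proof.
rewrite /logm; have H2 := ln2_pos.
apply: (Rmult_le_reg_r (ln (INR 2))) => //.
rewrite /Rdiv Rmult_assoc Rinv_l; last lra.
rewrite Rmult_1_r Rmult_1_l.
apply: ln_le'; first (simpl; lra). apply: Rmax_l.
Qed.

Lemma foldr_minn_le h (s : seq nat) x : x \in s -> foldr minn h s <= x.
Proof.
elim: s => [|y s IH] //=; rewrite inE => /orP [/eqP ->|Hx]; first exact: geq_minl.
apply: leq_trans (geq_minr _ _) (IH Hx).
Qed.

Lemma nmin_le (s : seq nat) x : x \in s -> nmin s <= x.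
Proof. exact: foldr_minn_le. Qed.

Lemma nmin_map_ex (g : nat -> nat) (s : seq nat) : s != [::] ->
  exists2 x, x \in s & nmin (map g s) = g x.
Proof.
case: s => [|y s] // _.
rewrite /nmin /=.
suff : forall h, foldr minn h (map g s) = h \/ exists2 x, x \in s & foldr minn h (map g s) = g x.
  case/(_ (g y)) => [E|[x Hx E]].
  - exists y; first by rewrite inE eqxx. rewrite E; lia.
  - case: (leqP (g y) (g x)) => H.
    + exists y; first by rewrite inE eqxx. rewrite E; lia.
    + exists x; first by rewrite inE Hx orbT. rewrite E; lia.
move=> h; elim: s => [|z s IH] /=; first by left.
case: (leqP (g z) (foldr minn h [seq g i | i <- s])) => H.
- right; exists z; first by rewrite inE eqxx. done.
- case: IH => [E|[x Hx E]].
  + by left.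
  + right; exists x; first by rewrite inE Hx orbT. done.
Qed.

Lemma rmin_map_ex (f : nat -> R) (s : seq nat) : s != [::] ->
  exists2 x, x \in s & rmin (map f s) = f x.
Proof.
case: s => [|y s] // _.
rewrite /rmin /=.
suff : forall h, foldr Rmin h (map f s) = h \/ exists2 x, x \in s & foldr Rmin h (map f s) = f x.
  case/(_ (f y)) => [E|[x Hx E]].
  - exists y; first by rewrite inE eqxx. rewrite E; apply: Rmin_left; exact: Rle_refl.
  - rewrite E; apply: (Rmin_case (f y) (f x) (fun r => exists2 x0, x0 \in y :: s & r = f x0)).
    + exists y => //; by rewrite inE eqxx.
    + exists x => //; by rewrite inE Hx orbT.
move=> h; elim: s => [|z s IH] /=; first by left.
apply: (Rmin_case (f z) (foldr Rmin h [seq f i | i <- s])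
  (fun r => r = h \/ exists2 x, x \in z :: s & r = f x)).
- right; exists z => //; by rewrite inE eqxx.
- case: IH => [E|[x Hx E]]; first by left.
  right; exists x => //; by rewrite inE Hx orbT.
Qed.

Lemma opt_exists (P : tree -> Prop) (D : tree -> nat) T0 : P T0 ->
  exists T, P T /\ forall T', P T' -> D T <= D T'.
Proof.
move=> H0.
suff : forall k T, P T -> D T <= k -> exists T, P T /\ forall T', P T' -> D T <= D T'.
  by move/(_ (D T0) T0 H0 (leqnn _)).
elim=> [|k IH] T HT Hk.
  exists T; split => // T' _; lia.
case: (classic (exists T', P T' /\ D T' < D T)) => [[T' [HT' Hlt]]|Hn].
- apply: (IH T' HT'); lia.
- exists T; split => // T' HT'; rewrite leqNgt; apply/negP => Hlt.
  apply: Hn; by exists T'.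
Qed.

Lemma acc_range n X i : all (fun x => (1 <= x) && (x <= n)) X ->
  1 <= i <= size X -> 0 < acc X i <= n.
Proof.
move=> /allP Hall Hi; rewrite /acc.
apply: Hall; apply: mem_nth.
case: i Hi => [|i] Hi; first by []. rewrite /=. lia.
Qed.

Theorem lemma8 :
  exists c : R, Rlt R0 c /\
    forall (l n m : nat) (X : seq nat),
      1 <= l -> n <= m -> size X = m ->
      all (fun x => (1 <= x) && (x <= n)) X ->
      exists T : tree, is_bst_on n T /\
        (forall T' : tree, is_bst_on n T' -> DistTree l T X <= DistTree l T' X) /\
        Rle (INR (DistTree l T X)) (Rmult c (UB l n X)).
Proof.
exists (9 : R); split; first lra.
move=> l n m X Hl Hnm Hm Hall.
set K := (lg n).+1.
have HnK : n < 2 ^ K := lg_lt n.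
pose Tf s := build s n K.+1 0.
pose rng i := iota (maxn 1 (i - l)) (i - maxn 1 (i - l)).
pose g i t := lg (absdiff (acc X i) (acc X t) + rho X i (acc X t)).
pose Bf i := if i == 1 then 7 * lg n else 9 * nmin (map (g i) (rng i)).
pose SB := \sum_(1 <= i < m.+1) Bf i.
have ClaimA : \sum_(0 <= s < 2 ^ K) DistTree l (Tf s) X <= 2 ^ K * SB.
  rewrite /DistTree Hm exchange_big_nat /SB big_distrr /=.
  rewrite big_nat_cond [X in _ <= X]big_nat_cond.
  apply: leq_sum => i /andP [/andP [Hi1 Hi2] _].
  rewrite /Bf; case: eqP => [Ei|Hne].
    rewrite Ei.
    apply: (@leq_trans (\sum_(0 <= s < 2 ^ K) (2 * K.+1).+1)).
      apply: leq_sum => s _.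
      have Hmem : 0 \in iota (1 - l) (1 - (1 - l)) by rewrite mem_iota; lia.
      apply: leq_trans (nmin_le (map_f _ Hmem)) _.
      have := dT_height (Tf s) (Defs.xt (Tf s) X 1) (Defs.xt (Tf s) X 0).
      have := (height_build s n K.+1 0 : height (Tf s) <= K.+1). lia.
    rewrite sum_nat_const_nat subn0 leq_mul2l; apply/orP; right.
    have := lg_ge1 n; rewrite /K; lia.
  have Hne' : rng i != [::] by rewrite -size_eq0 size_iota; lia.
  case: (nmin_map_ex (g i) Hne') => t Ht Et. rewrite Et.
  move: Ht; rewrite mem_iota => Ht.
  have Hmem : t \in iota (i - l) (i - (i - l)) by rewrite mem_iota; lia.
  have Ha := @acc_range n X i Hall ltac:(lia).
  have Hb := @acc_range n X t Hall ltac:(lia).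
  set D := absdiff (acc X i) (acc X t).
  apply: (@leq_trans (\sum_(0 <= s < 2 ^ K) (dT (Tf s) (acc X i) (acc X t)).+1)).
    apply: leq_sum => s _.
    apply: leq_trans (nmin_le (map_f _ Hmem)) _.
    rewrite /Defs.xt.
    have -> : (i == 0) = false by apply/eqP; lia.
    have -> : (t == 0) = false by apply/eqP; lia.
    by [].
  have E1 : \sum_(0 <= s < 2 ^ K) (dT (Tf s) (acc X i) (acc X t)).+1 =
     \sum_(0 <= s < 2 ^ K) dT (Tf s) (acc X i) (acc X t) + 2 ^ K.
    rewrite (eq_bigr (fun j => dT (Tf j) (acc X i) (acc X t) + 1)); last by move=> j _; rewrite addn1.
    by rewrite big_split /= sum_nat_const_nat subn0 muln1.
  rewrite E1.
  have P := @pair_sum n K (acc X i) (acc X t) (lg D).+1 HnK Ha Hb ltac:(rewrite addn1; exact: lg_lt).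
  apply: leq_trans (leq_add P (leqnn _)) _.
  rewrite -mulnSr leq_mul2l; apply/orP; right.
  have := lg_mono (leq_addr (rho X i (acc X t)) D).
  have := lg_ge1 D; rewrite /g /D; lia.
have Pick : exists s, s < 2 ^ K /\ DistTree l (Tf s) X <= SB.
  apply: NNPP => Hn.
  have Hall' : forall s, s < 2 ^ K -> SB.+1 <= DistTree l (Tf s) X.
    move=> s Hs; rewrite ltnNge; apply/negP => Hle; apply: Hn; by exists s.
  have : \sum_(0 <= s < 2 ^ K) SB.+1 <= \sum_(0 <= s < 2 ^ K) DistTree l (Tf s) X.
    rewrite big_nat_cond [X in _ <= X]big_nat_cond.
    apply: leq_sum => s /andP [/andP [_ Hs] _]; exact: Hall'.
  rewrite sum_nat_const_nat subn0 => H.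
  have := leq_trans H ClaimA; rewrite mulnS. have : 0 < 2 ^ K by rewrite expn_gt0. lia.
have ClaimR : Rle (INR SB) (9 * UB l n X).
  rewrite /SB /UB (big_morph INR plus_INR (erefl (INR 0))).
  rewrite big_nat_cond [Y in Rle _ (_ * Y)]big_nat_cond.
  rewrite Hm. apply: (big_rec2 (fun x y => Rle x (9 * y))); first by simpl; lra.
  move=> i y1 y2 /andP [/andP [Hi1 Hi2] _] Hy.
  suff Ht : Rle (INR (Bf i)) (9 * (if i == 1 then logm (INR n)
     else rmin [seq logm (INR (absdiff (acc X i) (acc X t') + rho X i (acc X t')))
               | t' <- iota (maxn 1 (i - l)) (i - maxn 1 (i - l))])).
    lra.
  rewrite /Bf; case: eqP => [Ei|Hne].
    rewrite mult_INR.
    have := lg_logm n; have := pos_INR (lg n); have := logm_ge1 (INR n).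
    have -> : INR 7 = (7 : R) by simpl; lra.
    lra.
  have Hne' : rng i != [::] by rewrite -size_eq0 size_iota; lia.
  case: (rmin_map_ex (fun t' => logm (INR (absdiff (acc X i) (acc X t') + rho X i (acc X t')))) Hne') => t Ht Et.
  rewrite /rng in Et; rewrite Et.
  have Hle : nmin [seq g i i0 | i0 <- rng i] <= g i t by apply: nmin_le; apply: map_f.
  rewrite mult_INR.
  have -> : INR 9 = (9 : R) by simpl; lra.
  have H1 : Rle (INR (nmin [seq g i i0 | i0 <- rng i])) (INR (g i t)) := le_INR _ _ (elimTF leP Hle).
  have H2 : Rle (INR (g i t)) (logm (INR (absdiff (acc X i) (acc X t) + rho X i (acc X t)))) := lg_logm _.
  apply: Rmult_le_compat_l; first lra. exact: Rle_trans H1 H2.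
case: Pick => s [Hs HD].
have Hbst : is_bst_on n (Tf s) by apply: build_bst.
case: (opt_exists (fun T => DistTree l T X) Hbst) => T [HT Hopt].
exists T; split => //; split => //.
apply: Rle_trans ClaimR.
apply: le_INR; apply/leP.
exact: leq_trans (Hopt _ Hbst) HD.
Qed.
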